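(* Let $V$ be a finite set of nails, let $g_1, g_2$ be specifications on $V$, and let $h_1, h_2 \in F(V)$ be words with $h_1$ solving $g_1$ and $h_2$ solving $g_2$ (the supports of $h_1,h_2$ may overlap). Suppose that for every $S \subseteq V$ with $g_1(S) = g_2(S) = \mathsf{hang}$ there exists $S'$ with $S \subseteq S' \subseteq V$ and $g_1(S') \ne g_2(S')$. Then $h_1 + h_2$ solves $g_1 \wedge g_2$, and $[h_1,h_2] = h_1 + h_2 - h_1 - h_2$ solves $g_1 \vee g_2$. Moreover, the hypothesis holds automatically when $V = V_1 \sqcup V_2$ and $g_i(S) = f_i(S \cap V_i)$ for specifications $f_i$ on $V_i$ ($i=1,2$).
   Context: Words are elements of the free group $F(V)$ on a finite set $V$ of nails, written additively ($+$ group operation, $-$ inverse, $0$ identity). For $S \subseteq V$, $h|_S$ is the image of $h$ under the homomorphism killing the generators in $S$. A specification on $V$ is a monotone function $f: 2^V \to \{\mathsf{hang}, \mathsf{fall}\}$ with $f(V) = \mathsf{fall}$, where $\mathsf{hang} < \mathsf{fall}$ and monotone means $S \subseteq S' \Rightarrow f(S) \le f(S')$. A word $h$ solves $f$ if for every $S \subseteq V$: $h|_S = 0 \iff f(S) = \mathsf{fall}$. The operations $\vee$, $\wedge$ on specifications are pointwise $\max$, $\min$ with respect to $\mathsf{hang} < \mathsf{fall}$. *)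

(* Defs.v *)
From mathcomp Require Import all_boot.
Set Implicit Arguments. Unset Strict Implicit. Unset Printing Implicit Defensive.

Section FreeGroup.
Variable V : finType.

(* A letter is a generator v (true) or its inverse -v (false). *)
Definition letter := (V * bool)%type.
(* Words over V^{+-1}; an element of the free group F(V) is represented by
   any word, two words representing the same element iff they have the same
   free reduction. *)
Definition word := seq letter.

Definition linv (x : letter) : letter := (x.1, ~~ x.2).

Definition red_step (st : word) (x : letter) : word :=
  if st is y :: st' then (if y == linv x then st' else x :: st) else [:: x].
Definition reduce (w : word) : word := rev (foldl red_step [::] w).

Definition fzero (w : word) : bool := reduce w == [::].

Definition fadd (w1 w2 : word) : word := w1 ++ w2.
Definition fopp (w : word) : word := rev (map linv w).
Definition fcomm (h1 h2 : word) : word :=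
  fadd (fadd (fadd h1 h2) (fopp h1)) (fopp h2).

(* h|_S : image of h under the homomorphism killing the generators in S *)
Definition frestr (h : word) (S : {set V}) : word :=
  filter (fun x : letter => x.1 \notin S) h.

(* Specifications: hang = false, fall = true, so hang < fall is false < true. *)
Definition hang := false.
Definition fall := true.

Definition is_spec (f : {set V} -> bool) : Prop :=
  (forall S S' : {set V}, S \subset S' -> f S <= f S') /\ f setT = fall.

Definition is_spec_on (W : {set V}) (f : {set V} -> bool) : Prop :=
  (forall S S' : {set V}, S \subset S' -> S' \subset W -> f S <= f S') /\
  f W = fall.

Definition solves (h : word) (f : {set V} -> bool) : Prop :=
  forall S : {set V}, fzero (frestr h S) = (f S == fall).

Definition spec_meet (f g : {set V} -> bool) S := f S && g S.
Definition spec_join (f g : {set V} -> bool) S := f S || g S.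

Definition sep_hyp (g1 g2 : {set V} -> bool) : Prop :=
  forall S : {set V}, g1 S = hang -> g2 S = hang ->
    exists S' : {set V}, S \subset S' /\ g1 S' != g2 S'.

End FreeGroup.

(* Main.v *)
Require Import Defs.
From mathcomp Require Import all_boot zify.
Set Implicit Arguments. Unset Strict Implicit. Unset Printing Implicit Defensive.

Definition nc {V : finType} (x y : letter V) : bool := y != linv x.
Notation rs := (@red_step _).

Lemma linvK {V : finType} (x : letter V) : linv (linv x) = x.
Proof. by case: x => a b; rewrite /linv /= negbK. Qed.

Lemma linv_eq {V : finType} (x y : letter V) : (y == linv x) = (x == linv y).
Proof.
apply/eqP/eqP => ->; by rewrite linvK.
Qed.

Lemma nc_sym {V : finType} (x y : letter V) : nc x y = nc y x.
Proof. by rewrite /nc linv_eq. Qed.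

Lemma linv_neq {V : finType} (x : letter V) : (x == linv x) = false.
Proof. by case: x => a b; rewrite /linv /= xpair_eqE eqxx /=; case: b. Qed.

Lemma sorted_rev_nc {V : finType} (s : word V) : sorted nc (rev s) = sorted nc s.
Proof.
rewrite rev_sorted; case: s => //= x s; apply: eq_path => a b; exact: nc_sym.
Qed.

Lemma rs_sorted {V : finType} (st : word V) x : sorted nc st -> sorted nc (rs st x).
Proof.
case: st => [|y st] //=.
case: ifP => [_|/negbT H]; first by case: st => //= ? ? /andP [].
by move=> Hp /=; rewrite Hp andbT.
Qed.

Lemma foldl_sorted {V : finType} (w st : word V) :
  sorted nc st -> sorted nc (foldl rs st w).
Proof. elim: w st => //= x w IH st Hst; apply: IH; exact: rs_sorted. Qed.

Lemma rs_cancel {V : finType} (A : word V) x : sorted nc A -> rs (rs A x) (linv x) = A.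
Proof.
case: A => [|z A] /=; first by rewrite linvK eqxx.
case: ifP => [/eqP -> | _].
  case: A => [|w A] //= /andP [H _].
  by move: H; rewrite /nc linvK => /negbTE ->.
by move=> _ /=; rewrite linvK eqxx.
Qed.

Lemma reduce_sorted {V : finType} (w : word V) : sorted nc (reduce w).
Proof. by rewrite /reduce sorted_rev_nc; apply: foldl_sorted. Qed.

Lemma foldl_noc {V : finType} (w st : word V) :
  sorted nc (rev w ++ st) -> foldl rs st w = rev w ++ st.
Proof.
elim: w st => //= x w IH st.
rewrite rev_cons cat_rcons => H.
have Hx : rs st x = x :: st.
  case: st H => [|y st] //= H.
  have : nc x y.
    by move: H; rewrite sorted_cat_cons => /andP [_ /andP []].
  by rewrite /nc => /negbTE ->.
by rewrite Hx IH.
Qed.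

Lemma reduce_id {V : finType} (w : word V) : sorted nc w -> reduce w = w.
Proof.
move=> H; rewrite /reduce foldl_noc ?cats0 ?revK // ?sorted_rev_nc //.
Qed.

Lemma foldl_reduce {V : finType} (st v : word V) :
  sorted nc st -> foldl rs st v = foldl rs st (reduce v).
Proof.
move=> Hst; elim/last_ind: v => [|v x IH] //.
rewrite /reduce !foldl_rcons -/rs.
set S := foldl rs [::] v.
rewrite IH /reduce -/S.
have HS : sorted nc S by apply: foldl_sorted.
case: S HS => [|y T] HS /=; first by [].
case: ifP => [/eqP Hy | _].
  rewrite rev_cons foldl_rcons Hy.
  rewrite -{2}[x]linvK rs_cancel //.
  exact: foldl_sorted.
by rewrite [rev (x :: _)]rev_cons foldl_rcons.
Qed.

Lemma reduce_cat3 {V : finType} (u v t : word V) :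
  reduce (u ++ v ++ t) = reduce (u ++ reduce v ++ t).
Proof.
rewrite /reduce !foldl_cat; congr (rev (foldl _ _ _)).
rewrite -foldl_reduce //; exact: foldl_sorted.
Qed.

Lemma reduce_catl {V : finType} (u t : word V) :
  reduce (u ++ t) = reduce (reduce u ++ t).
Proof. exact: (reduce_cat3 [::] u t). Qed.

Lemma reduce_catr {V : finType} (u v : word V) :
  reduce (u ++ v) = reduce (u ++ reduce v).
Proof. by rewrite -[u ++ v]cats0 -catA reduce_cat3 cats0. Qed.

Lemma reduce_idem {V : finType} (w : word V) : reduce (reduce w) = reduce w.
Proof. by rewrite reduce_id // reduce_sorted. Qed.

Lemma reduce_pair {V : finType} (u v : word V) x :
  reduce (u ++ x :: linv x :: v) = reduce (u ++ v).
Proof.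
rewrite -cat1s -(cat1s (linv x)) (catA [:: x]) reduce_cat3.
have -> : reduce ([:: x] ++ [:: linv x]) = [::].
  by rewrite /reduce /= linvK eqxx.
by [].
Qed.

Lemma size_foldl {V : finType} (st w : word V) :
  size (foldl rs st w) <= size st + size w.
Proof.
elim: w st => [|x w IH] st /=; first by rewrite addn0.
apply: leq_trans (IH _) _; rewrite addnS -addSn leq_add2r.
case: st => [|y st] //=; case: ifP => // _; exact: leqW.
Qed.

Lemma size_reduce {V : finType} (w : word V) : size (reduce w) <= size w.
Proof. by rewrite /reduce size_rev; apply: (leq_trans (size_foldl _ _)). Qed.

Lemma cancel_inv {V : finType} (T : Type) (P : word V -> T) :
  (forall u v x, P (u ++ x :: linv x :: v) = P (u ++ v)) ->
  forall w, P w = P (reduce w).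
Proof.
move=> HP w; rewrite /reduce.
suff : forall st, P (rev st ++ w) = P (rev (foldl rs st w)) by move/(_ [::]).
elim: w => [|x w IH] st /=; first by rewrite cats0.
rewrite -IH.
case: st => [|y st] /=; first by [].
case: ifP => [/eqP -> | _].
  by rewrite rev_cons cat_rcons -{2}[x]linvK HP.
by rewrite [rev (x :: _)]rev_cons cat_rcons.
Qed.

Lemma fopp_cons {V : finType} x (w : word V) : fopp (x :: w) = fopp w ++ [:: linv x].
Proof. by rewrite /fopp /= rev_cons cats1. Qed.

Lemma foppK {V : finType} (w : word V) : fopp (fopp w) = w.
Proof. by rewrite /fopp map_rev revK -map_comp (eq_map linvK) map_id. Qed.

Lemma fopp_cat {V : finType} (u w : word V) : fopp (u ++ w) = fopp w ++ fopp u.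
Proof. by rewrite /fopp map_cat rev_cat. Qed.

Lemma reduce_addN {V : finType} (w : word V) : reduce (w ++ fopp w) = [::].
Proof.
elim: w => [|x w IH] //.
rewrite fopp_cons -cat1s -catA (catA w) reduce_cat3 IH /=.
by rewrite /reduce /= linvK eqxx.
Qed.

Lemma reduce_Nadd {V : finType} (w : word V) : reduce (fopp w ++ w) = [::].
Proof. by rewrite -{2}[w]foppK reduce_addN. Qed.

Lemma reduce_zero3 {V : finType} (u a t : word V) :
  fzero a -> reduce (u ++ a ++ t) = reduce (u ++ t).
Proof. by move/eqP=> Ha; rewrite reduce_cat3 Ha. Qed.

Lemma fzero_addN {V : finType} (w : word V) : fzero (w ++ fopp w).
Proof. by rewrite /fzero reduce_addN. Qed.

Lemma fzero_Nadd {V : finType} (w : word V) : fzero (fopp w ++ w).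
Proof. by rewrite /fzero reduce_Nadd. Qed.

Lemma fzero_conj {V : finType} (u w : word V) : fzero (u ++ w ++ fopp u) = fzero w.
Proof.
apply/idP/idP => H; rewrite /fzero.
  have -> : reduce w = reduce (fopp u ++ (u ++ w ++ fopp u) ++ u).
    have -> : fopp u ++ (u ++ w ++ fopp u) ++ u = [::] ++ (fopp u ++ u) ++ (w ++ (fopp u ++ u) ++ [::]).
      by rewrite /= !catA cats0.
    by rewrite reduce_zero3 ?fzero_Nadd //= reduce_zero3 ?fzero_Nadd // cats0.
  by rewrite reduce_zero3 // reduce_Nadd.
by rewrite reduce_zero3 // reduce_addN.
Qed.

Lemma fzero_opp {V : finType} (w : word V) : fzero (fopp w) = fzero w.
Proof.
suff H : forall w : word V, fzero w -> fzero (fopp w).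
  by apply/idP/idP => /H //; rewrite foppK.
move=> {}w H; rewrite /fzero.
by rewrite -(cats0 (fopp w)) -(reduce_zero3 (fopp w) [::] H) cats0 reduce_Nadd.
Qed.

Definition inv_pred {V : finType} (p : pred (letter V)) := forall x, p (linv x) = p x.

Lemma filter_fopp {V : finType} (p : pred (letter V)) (w : word V) :
  inv_pred p -> filter p (fopp w) = fopp (filter p w).
Proof.
move=> Hp; rewrite /fopp filter_rev; congr rev.
by elim: w => //= x w ->; rewrite Hp; case: (p x).
Qed.

Lemma reduce_filter {V : finType} (p : pred (letter V)) (w : word V) :
  inv_pred p -> reduce (filter p w) = reduce (filter p (reduce w)).
Proof.
move=> Hp; apply: (@cancel_inv V _ (fun w => reduce (filter p w))) => u v x.
rewrite !filter_cat /= Hp; case: (p x) => //; exact: reduce_pair.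
Qed.

Lemma fzero_filter {V : finType} (p : pred (letter V)) (w : word V) :
  inv_pred p -> fzero w -> fzero (filter p w).
Proof. by move=> Hp /eqP Hw; rewrite /fzero reduce_filter // Hw. Qed.

Definition jn {V : finType} (s t : word V) : bool :=
  if s is x :: s' then (if t is y :: _ then nc (last x s') y else true) else true.

Lemma sorted_cat {V : finType} (s t : word V) :
  sorted nc (s ++ t) = [&& sorted nc s, jn s t & sorted nc t].
Proof.
case: s => [|x s] //=; case: t => [|y t] /=; first by rewrite cats0 andbT.
by rewrite cat_path /= andbA.
Qed.

Lemma jn_consr {V : finType} (s t : word V) y : jn s (y :: t) = jn s [:: y].
Proof. by case: s. Qed.

Lemma jn_catl {V : finType} (s t r : word V) : t != [::] -> jn (s ++ t) r = jn t r.
Proof.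
case: t => [|y t] // _; case: s => [|x s] //=; case: r => // z r.
by rewrite last_cat.
Qed.

Definition pow {V : finType} (z : word V) n := flatten (nseq n z).

Lemma pow_S {V : finType} (z : word V) n : pow z n.+1 = z ++ pow z n.
Proof. by []. Qed.

Lemma pow_Sr {V : finType} (z : word V) n : pow z n.+1 = pow z n ++ z.
Proof. elim: n => [|n IH]; first by rewrite /pow /= cats0. by rewrite [LHS]pow_S IH catA -pow_S IH. Qed.

Lemma filter_pow {V : finType} (p : pred (letter V)) (z : word V) n :
  filter p (pow z n) = pow (filter p z) n.
Proof. by elim: n => //= n IH; rewrite filter_cat IH. Qed.

Definition cyc {V : finType} (c : word V) : bool :=
  if c is x :: c' then nc (last x c') x else true.

Lemma sorted_pow {V : finType} (c : word V) n :
  sorted nc c -> cyc c -> sorted nc (pow c n).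
Proof.
move=> Hs Hc; elim: n => [|n IH] //; rewrite pow_S sorted_cat Hs IH andbT.
case: c Hs Hc {IH} => [|x c] //= _ Hc; case: n => [|n] //=.
Qed.

Lemma decomp {V : finType} (r : word V) : sorted nc r ->
  exists u c, [/\ r = u ++ c ++ fopp u, cyc c & sorted nc c].
Proof.
move: {2}(size r) (leqnn (size r)) => n; elim: n r => [|n IH] r.
  by rewrite leqn0 => /nilP -> _; exists [::], [::].
case: r => [|x r] Hn Hs; first by exists [::], [::].
case/lastP: r Hn Hs => [|m y] Hn Hs.
  by exists [::], [:: x]; split => //; rewrite /cyc /= /nc linv_neq.
case: (eqVneq y (linv x)) => Hy.
  have Hm : sorted nc m.
    by move: Hs => /= /path_sorted; rewrite -cats1 => /cat_sorted2 [].
  have [|u [c [Hr Hc Hcs]]] := IH m _ Hm.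
    by move: Hn; rewrite /= size_rcons ltnS => /ltnW.
  exists (x :: u), c; split => //.
  by rewrite Hy Hr fopp_cons -cats1 /= !catA.
exists [::], (x :: rcons m y); split => //=; first by rewrite cats0.
by rewrite last_rcons /nc -linv_eq.
Qed.

Lemma jn_rcons {V : finType} (s t : word V) l y : jn (rcons s l) (y :: t) = nc l y.
Proof. by case: s => //= a s; rewrite last_rcons. Qed.

Lemma fopp_rcons {V : finType} (s : word V) l : fopp (rcons s l) = linv l :: fopp s.
Proof. by rewrite /fopp map_rcons rev_rcons. Qed.

Lemma reduce_pow {V : finType} (w : word V) k :
  reduce (pow w k) = reduce (pow (reduce w) k).
Proof.
elim: k => [|k IH] //; rewrite !pow_S reduce_catl reduce_catr IH -reduce_catr.
by rewrite reduce_catl reduce_idem.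
Qed.

Lemma reduce_pow_conj {V : finType} (u c : word V) k :
  reduce (pow (u ++ c ++ fopp u) k) = reduce (u ++ pow c k ++ fopp u).
Proof.
elim: k => [|k IH] /=; first by rewrite reduce_addN.
rewrite [pow _ k.+1]pow_S reduce_catr IH -reduce_catr.
have -> : (u ++ c ++ fopp u) ++ u ++ pow c k ++ fopp u =
          (u ++ c) ++ (fopp u ++ u) ++ (pow c k ++ fopp u) by rewrite !catA.
by rewrite reduce_zero3 ?fzero_Nadd // pow_S !catA.
Qed.

Lemma torsion {V : finType} (w : word V) k : fzero (pow w k.+1) -> fzero w.
Proof.
rewrite /fzero reduce_pow.
have Hs := reduce_sorted w.
have [u [c [Hr Hc Hcs]]] := decomp Hs.
rewrite Hr reduce_pow_conj; rewrite Hr in Hs.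
case: c Hr Hc Hcs Hs => [|x c] Hr Hc Hcs Hs.
  move=> _; case/lastP: u Hr Hs => [|u l] //= Hr.
  by rewrite fopp_rcons sorted_cat jn_rcons /nc eqxx /= andbF.
have Hs' : sorted nc (u ++ pow (x :: c) k.+1 ++ fopp u).
  rewrite !sorted_cat in Hs; case/and3P: Hs => Hu Hj /and3P [_ Hj2 Hf].
  move: Hj; rewrite cat_cons jn_consr => Hj.
  set P := pow (x :: c) k.+1.
  have HP : P = x :: (c ++ pow (x :: c) k) by [].
  have HPs : sorted nc P by apply: sorted_pow.
  rewrite (sorted_cat u) (sorted_cat P) Hu Hf HPs !andbT.
  rewrite {1}HP cat_cons jn_consr Hj andTb.
  by rewrite /P pow_Sr jn_catl.
rewrite reduce_id //.
by case: u {Hs Hs' Hr}.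
Qed.

Lemma pow_add {V : finType} (z : word V) i j : pow z (i + j) = pow z i ++ pow z j.
Proof. by elim: i => [|i IH] //; rewrite addSn !pow_S IH catA. Qed.

Lemma cat_injl {T : Type} (s t t' : seq T) : s ++ t = s ++ t' -> t = t'.
Proof. by elim: s => //= a s IH [] /IH. Qed.

Lemma str_comm {V : finType} (x y : word V) : x ++ y = y ++ x ->
  exists z i j, x = pow z i /\ y = pow z j.
Proof.
move: {2}(size x + size y) (leqnn (size x + size y)) => n.
elim: n x y => [|n IH] x y.
  rewrite leqn0 addn_eq0 => /andP [/nilP -> /nilP ->] _.
  by exists [::], 0, 0.
move=> Hn Hxy.
case: x Hn Hxy => [|a x] Hn Hxy.
  by exists y, 0, 1; rewrite /pow /= cats0.
case: y Hn Hxy => [|b y] Hn Hxy.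
  by exists (a :: x), 1, 0; rewrite /pow /= cats0.
wlog Hle : a b x y Hn Hxy / size x <= size y.
  move=> W; case: (leqP (size x) (size y)) => H; first exact: W.
  have Hn' : size (b :: y) + size (a :: x) <= n.+1 by rewrite addnC.
  have [z [i [j [H1 H2]]]] := W b a y x Hn' (esym Hxy) (ltnW H).
  by exists z, j, i.
have Hpre : b :: y = (a :: x) ++ drop (size (a :: x)) (b :: y).
  have : take (size (a :: x)) ((a :: x) ++ b :: y) = take (size (a :: x)) ((b :: y) ++ a :: x).
    by rewrite Hxy.
  rewrite take_size_cat // take_cat; case: ifP => [_ Ht | /negbT].
    by rewrite {1}Ht cat_take_drop.
  rewrite -leqNgt /= !ltnS => Hge.
  have Hsz : size y = size x by apply/eqP; rewrite eqn_leq Hge Hle.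
  rewrite Hsz subnn take0 cats0 => <-.
  by rewrite drop_oversize ?cats0 //= Hsz.
set y' := drop _ (b :: y) in Hpre.
rewrite Hpre in Hxy Hn.
have Hxy' : (a :: x) ++ y' = y' ++ (a :: x).
  by apply: (@cat_injl _ (a :: x)); rewrite {1}Hxy -!catA.
have Hn' : size (a :: x) + size y' <= n.
  move: Hn; rewrite size_cat /= => Hn; lia.
have [z [i [j [H1 H2]]]] := IH _ _ Hn' Hxy'.
exists z, i, (i + j); split => //.
by rewrite Hpre pow_add -H1 -H2.
Qed.



Lemma sorted_fopp {V : finType} (s : word V) : sorted nc (fopp s) = sorted nc s.
Proof.
rewrite /fopp sorted_rev_nc sorted_map; case: s => //= x s; apply: eq_path => a b.
by rewrite /relpre /nc /= (inj_eq (can_inj linvK)).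
Qed.

Lemma fzero_pow {V : finType} (w : word V) i : 0 < i -> fzero (pow w i) = fzero w.
Proof.
case: i => // i _; apply/idP/idP; first exact: torsion.
move/eqP => H; rewrite /fzero reduce_pow H.
by elim: i.+1 => //.
Qed.

Lemma comm_pow {V : finType} (x y : word V) p : inv_pred p -> x != [::] -> y != [::] ->
  x ++ y = y ++ x -> fzero (filter p x) = fzero (filter p y).
Proof.
move=> Hp Hx Hy /str_comm [z [i [j [Hxz Hyz]]]].
have Hi : 0 < i by case: i Hxz => // Hxz; rewrite Hxz in Hx.
have Hj : 0 < j by case: j Hyz => // Hyz; rewrite Hyz in Hy.
by rewrite Hxz Hyz !filter_pow !fzero_pow.
Qed.

Lemma sorted_uu {V : finType} (u : word V) : sorted nc (u ++ fopp u) -> u = [::].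
Proof.
case/lastP: u => [|u l] //.
by rewrite fopp_rcons sorted_cat jn_rcons /nc eqxx /= andbF.
Qed.

Lemma reduce_cat_eq {V : finType} (s s' t t' : word V) :
  reduce s = reduce s' -> reduce t = reduce t' -> reduce (s ++ t) = reduce (s' ++ t').
Proof. by move=> Hs Ht; rewrite reduce_catl Hs reduce_catr Ht -reduce_catr -reduce_catl. Qed.

Lemma conj_mul {V : finType} (u s t : word V) :
  reduce ((fopp u ++ s ++ u) ++ (fopp u ++ t ++ u)) = reduce (fopp u ++ (s ++ t) ++ u).
Proof.
have -> : (fopp u ++ s ++ u) ++ (fopp u ++ t ++ u) = (fopp u ++ s) ++ (u ++ fopp u) ++ (t ++ u).
  by rewrite !catA.
by rewrite reduce_zero3 ?fzero_addN // !catA.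
Qed.

Lemma fopp_hd {V : finType} x (c : word V) :
  fopp (x :: c) = linv (last x c) :: fopp (belast x c).
Proof. by rewrite lastI fopp_rcons. Qed.

Lemma fzero_filter_red {V : finType} (p : pred (letter V)) (w : word V) :
  inv_pred p -> fzero (filter p w) = fzero (filter p (reduce w)).
Proof. by move=> Hp; rewrite /fzero reduce_filter. Qed.

Lemma not_sorted_small {V : finType} (s t : word V) : sorted nc s -> sorted nc t ->
  ~~ sorted nc (s ++ t) -> size (reduce (s ++ t)) < size s + size t.
Proof.
move=> Hs Ht; rewrite sorted_cat Hs Ht andbT /=.
case/lastP: s {Hs} => [|s l] //.
case: t {Ht} => [|y t]; first by case: (rcons s l).
rewrite jn_rcons /nc negbK => /eqP ->.
rewrite cat_rcons reduce_pair size_rcons /=.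
apply: leq_ltn_trans (size_reduce _) _; rewrite size_cat; lia.
Qed.

Lemma KT {V : finType} (a b : word V) (p : pred (letter V)) : inv_pred p ->
  ~~ fzero a -> ~~ fzero b -> reduce (a ++ b) = reduce (b ++ a) ->
  fzero (filter p a) = fzero (filter p b).
Proof.
move=> Hp Ha Hb Hab.
have [u [c [Hr Hc Hcs]]] := decomp (reduce_sorted a).
have Hc0 : c != [::].
  apply/negP => /eqP Hc0; move: Hr; rewrite Hc0 /= => Hr.
  have := reduce_sorted a; rewrite Hr => /sorted_uu Hu.
  by move: Ha; rewrite /fzero Hr Hu eqxx.
set y := reduce (fopp u ++ b ++ u).
have F1 : fzero (filter p a) = fzero (filter p c).
  by rewrite fzero_filter_red // Hr !filter_cat filter_fopp // fzero_conj.
have F2 : fzero (filter p b) = fzero (filter p y).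
  rewrite /y -fzero_filter_red //.
  rewrite !filter_cat filter_fopp // -{2}(foppK (filter p u)).
  by rewrite fzero_conj.
have Lc : reduce c = reduce (fopp u ++ a ++ u).
  rewrite reduce_cat3 Hr.
  have -> : fopp u ++ (u ++ c ++ fopp u) ++ u = [::] ++ (fopp u ++ u) ++ (c ++ (fopp u ++ u) ++ [::]).
    by rewrite /= !catA cats0.
  by rewrite reduce_zero3 ?fzero_Nadd //= reduce_zero3 ?fzero_Nadd // cats0.
have F3 : reduce (c ++ y) = reduce (y ++ c).
  rewrite (@reduce_cat_eq _ c (fopp u ++ a ++ u) y (fopp u ++ b ++ u)) ?reduce_idem //.
  rewrite (@reduce_cat_eq _ y (fopp u ++ b ++ u) c (fopp u ++ a ++ u)) ?reduce_idem //.
  by rewrite !conj_mul reduce_cat3 Hab -reduce_cat3.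
have F4 : y != [::].
  apply/negP => /eqP Hy; move: Hb; rewrite -(fzero_conj (fopp u)) foppK /fzero -/y Hy.
  by [].
have Hys : sorted nc y by apply: reduce_sorted.
have Hx : exists x, [/\ x != [::], x ++ y = y ++ x & fzero (filter p x) = fzero (filter p c)].
  case Hs1: (sorted nc (c ++ y)); case Hs2: (sorted nc (y ++ c)).
  - exists c; split => //.
    by rewrite -(reduce_id Hs1) -(reduce_id Hs2).
  - have := not_sorted_small Hys Hcs (negbT Hs2).
    by rewrite -F3 (reduce_id Hs1) size_cat addnC ltnn.
  - have := not_sorted_small Hcs Hys (negbT Hs1).
    by rewrite F3 (reduce_id Hs2) size_cat addnC ltnn.
  exists (fopp c); split.
  - by rewrite /fopp -size_eq0 size_rev size_map size_eq0.
  - have E : reduce (fopp c ++ y) = reduce (y ++ fopp c).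
      transitivity (reduce (fopp c ++ (y ++ c) ++ fopp c)).
        have -> : fopp c ++ (y ++ c) ++ fopp c = (fopp c ++ y) ++ (c ++ fopp c) ++ [::].
          by rewrite !catA cats0.
        by rewrite reduce_zero3 ?fzero_addN // cats0.
      rewrite reduce_cat3 -F3 -reduce_cat3.
      have -> : fopp c ++ (c ++ y) ++ fopp c = [::] ++ (fopp c ++ c) ++ (y ++ fopp c).
        by rewrite !catA.
      by rewrite reduce_zero3 ?fzero_Nadd.
    case: c Hc0 Hr Hc Hcs F1 Lc F3 Hs1 Hs2 E => [|x0 c] // _ _ Hc Hcs _ _ _ Hs1 Hs2 E.
    case: y F4 Hys Hs1 Hs2 E {F2} => [|y0 y'] // _ Hys Hs1 Hs2 E.
    move/negbT: Hs1; rewrite sorted_cat Hcs Hys andbT /= /nc negbK => Hs1.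
    move/negbT: Hs2; rewrite sorted_cat Hcs Hys andbT /= /nc negbK => Hs2.
    move: Hc; rewrite /cyc /nc => Hc.
    rewrite -(reduce_id (w := fopp (x0 :: c) ++ y0 :: y')) ?E ?reduce_id //.
      rewrite sorted_cat Hys sorted_fopp Hcs andbT /= fopp_hd /= /nc -(eqP Hs2).
      by rewrite eq_sym.
    rewrite sorted_cat Hys sorted_fopp Hcs andbT /= fopp_cons cats1 jn_rcons /nc linvK (eqP Hs1).
    by rewrite eq_sym.
  - by rewrite filter_fopp // fzero_opp.
case: Hx => x [Hx0 Hxy Hxc].
by rewrite F1 F2 -Hxc; apply: comm_pow.
Qed.

Lemma zero_sum {V : finType} (x y : word V) : fzero (x ++ y) -> fzero x = fzero y.
Proof.
move=> H; apply/idP/idP => Hz.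
  by move: H; rewrite /fzero -[x ++ y]cat0s reduce_zero3.
by move: H; rewrite /fzero -[y]cats0 reduce_zero3 // cats0.
Qed.

Lemma comm_zero {V : finType} (a b : word V) :
  fzero (fcomm a b) = (reduce (a ++ b) == reduce (b ++ a)).
Proof.
rewrite /fcomm /fadd; apply/idP/eqP => H.
  have -> : reduce (b ++ a) = reduce ([::] ++ (((a ++ b) ++ fopp a) ++ fopp b) ++ (b ++ a)).
    by rewrite reduce_zero3.
  have -> : [::] ++ (((a ++ b) ++ fopp a) ++ fopp b) ++ (b ++ a) =
            (a ++ b ++ fopp a) ++ (fopp b ++ b) ++ a by rewrite /= !catA.
  rewrite reduce_zero3 ?fzero_Nadd //.
  have -> : (a ++ b ++ fopp a) ++ a = (a ++ b) ++ (fopp a ++ a) ++ [::] by rewrite !catA cats0.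
  by rewrite reduce_zero3 ?fzero_Nadd // cats0.
rewrite /fzero -catA reduce_catl H -reduce_catl.
have -> : (b ++ a) ++ fopp a ++ fopp b = b ++ (a ++ fopp a) ++ fopp b by rewrite !catA.
by rewrite reduce_zero3 ?fzero_addN // reduce_addN.
Qed.

Lemma frestr_frestr {V : finType} (h : word V) (S S' : {set V}) :
  S \subset S' -> filter (fun x : letter V => x.1 \notin S') (frestr h S) = frestr h S'.
Proof.
move=> HS; rewrite /frestr -filter_predI; apply: eq_filter => x /=.
case H: (x.1 \in S') => //=; apply/negP => Hx.
by move: H; rewrite (subsetP HS _ Hx).
Qed.

Theorem lemma2 (V : finType) (g1 g2 : {set V} -> bool) :
  is_spec g1 -> is_spec g2 ->
  (forall h1 h2 : word V, solves h1 g1 -> solves h2 g2 -> sep_hyp g1 g2 ->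
     solves (fadd h1 h2) (spec_meet g1 g2) /\
     solves (fcomm h1 h2) (spec_join g1 g2)) /\
  (forall (V1 V2 : {set V}) (f1 f2 : {set V} -> bool),
     [disjoint V1 & V2] -> V1 :|: V2 = setT ->
     is_spec_on V1 f1 -> is_spec_on V2 f2 ->
     (forall S, g1 S = f1 (S :&: V1)) -> (forall S, g2 S = f2 (S :&: V2)) ->
     sep_hyp g1 g2).
Proof.
move=> _ _; split.
  move=> h1 h2 H1 H2 Hsep.
  have Hs1 : forall S, fzero (frestr h1 S) = g1 S by move=> S; rewrite H1 eqb_id.
  have Hs2 : forall S, fzero (frestr h2 S) = g2 S by move=> S; rewrite H2 eqb_id.
  have Hpp : forall S' : {set V}, inv_pred (fun x : letter V => x.1 \notin S') by [].
  split => S.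
    rewrite /spec_meet /fadd eqb_id /frestr filter_cat -/(frestr h1 S) -/(frestr h2 S).
    rewrite -Hs1 -Hs2.
    set a := frestr h1 S; set b := frestr h2 S.
    case Za: (fzero a); case Zb: (fzero b) => /=.
    - by rewrite /fzero -[a ++ b]cat0s reduce_zero3 // -/(fzero b) Zb.
    - by rewrite /fzero -[a ++ b]cat0s reduce_zero3 // -/(fzero b) Zb.
    - by rewrite /fzero -[b]cats0 reduce_zero3 // cats0 -/(fzero a) Za.
    apply/negP => Hab.
    have [S' [HS' Hne]] := Hsep S (etrans (esym (Hs1 S)) Za) (etrans (esym (Hs2 S)) Zb).
    have := fzero_filter (Hpp S') Hab.
    rewrite filter_cat /a /b !frestr_frestr // => /zero_sum.
    by rewrite Hs1 Hs2 => E; move: Hne; rewrite E eqxx.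
  rewrite /spec_join eqb_id /fcomm /fadd /frestr !filter_cat !filter_fopp //.
  rewrite -/(frestr h1 S) -/(frestr h2 S) -/(fadd _ _) -Hs1 -Hs2.
  change (fzero (fcomm (frestr h1 S) (frestr h2 S)) = (fzero (frestr h1 S) || fzero (frestr h2 S))).
  rewrite comm_zero.
  set a := frestr h1 S; set b := frestr h2 S.
  case Za: (fzero a).
    by rewrite /= -[a ++ b]cat0s reduce_zero3 // cat0s -[b ++ a]cats0 -catA reduce_zero3 // cats0 eqxx.
  case Zb: (fzero b).
    by rewrite /= -[b ++ a]cat0s reduce_zero3 // cat0s -[a ++ b]cats0 -catA reduce_zero3 // cats0 eqxx.
  apply/negP => /eqP Hab /=.
  have [S' [HS' Hne]] := Hsep S (etrans (esym (Hs1 S)) Za) (etrans (esym (Hs2 S)) Zb).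
  have := KT (Hpp S') (negbT Za) (negbT Zb) Hab.
  rewrite /a /b !frestr_frestr // Hs1 Hs2 => E.
  by move: Hne; rewrite E eqxx.
move=> V1 V2 f1 f2 Hdis HU [_ Hf1] _ E1 E2 S G1 G2.
exists (S :|: V1); split; first exact: subsetUl.
rewrite E1 E2 !setIUl setIid.
have -> : S :&: V1 :|: V1 = V1 by apply/setUidPr; exact: subsetIr.
have -> : V1 :&: V2 = set0 by apply/eqP; rewrite setI_eq0.
by rewrite setU0 -E2 G2 Hf1.
Qed.
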